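(* Let $(X,d)$ be a metric space (not necessarily complete) with $|X|\geqslant 3$, and let $T\colon X\to X$ satisfy: (i) $T$ has no periodic points of prime period $2$, i.e. $T(T(x))\neq x$ for every $x\in X$ with $Tx\neq x$; (ii) there exist $\alpha,\lambda\geqslant0$ with $2\alpha+\frac{3\lambda}{2}<1$ such that $$d(Tx,Ty)+d(Ty,Tz)+d(Tx,Tz)\leqslant \alpha\big(d(x,y)+d(y,z)+d(z,x)\big)+\lambda\big(d(x,Tx)+d(y,Ty)+d(z,Tz)\big)$$ for all pairwise distinct $x,y,z\in X$; (iii) $T$ is continuous at a point $x^*\in X$; (iv) there exists $x_0\in X$ such that the sequence of iterates $x_n=Tx_{n-1}$, $n=1,2,\dots$, has a subsequence $(x_{n_k})$ converging to $x^*$. Then $x^*$ is a fixed point of $T$, and $T$ has at most two fixed points. *)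

(* Defs.v *)
From Stdlib Require Import Reals.
Open Scope R_scope.

Definition is_metric {X : Type} (d : X -> X -> R) : Prop :=
  (forall x y, 0 <= d x y) /\
  (forall x y, d x y = 0 <-> x = y) /\
  (forall x y, d x y = d y x) /\
  (forall x y z, d x z <= d x y + d y z).

Fixpoint iter_T {X : Type} (T : X -> X) (x0 : X) (n : nat) : X :=
  match n with
  | O => x0
  | S m => T (iter_T T x0 m)
  end.

Definition continuous_at_metric {X : Type} (d : X -> X -> R) (T : X -> X) (p : X) : Prop :=
  forall eps, 0 < eps -> exists delta, 0 < delta /\
    forall x, d x p < delta -> d (T x) (T p) < eps.

Definition converges_to {X : Type} (d : X -> X -> R) (u : nat -> X) (l : X) : Prop :=
  forall eps, 0 < eps -> exists N : nat, forall n, (N <= n)%nat -> d (u n) l < eps.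

Definition strictly_increasing (phi : nat -> nat) : Prop :=
  forall k, (phi k < phi (S k))%nat.

(* Main.v *)
Require Import Defs.
From Stdlib Require Import Reals Lra Lia Classical.
Open Scope R_scope.

Lemma phi_ge (phi : nat -> nat) : strictly_increasing phi -> forall k, (k <= phi k)%nat.
Proof.
  intros H k; induction k; [lia|]. specialize (H k). lia.
Qed.

Theorem theorem5p1 (X : Type) (d : X -> X -> R) (T : X -> X)
  (alpha lambda : R) (xstar x0 : X) :
  is_metric d ->
  (exists a b c : X, a <> b /\ b <> c /\ a <> c) ->
  (forall x, T x <> x -> T (T x) <> x) ->
  0 <= alpha -> 0 <= lambda -> 2 * alpha + 3 * lambda / 2 < 1 ->
  (forall x y z, x <> y -> y <> z -> x <> z ->
     d (T x) (T y) + d (T y) (T z) + d (T x) (T z)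
     <= alpha * (d x y + d y z + d z x)
        + lambda * (d x (T x) + d y (T y) + d z (T z))) ->
  continuous_at_metric d T xstar ->
  (exists phi : nat -> nat, strictly_increasing phi /\
     converges_to d (fun k => iter_T T x0 (phi k)) xstar) ->
  T xstar = xstar /\
  (forall p q r : X, T p = p -> T q = q -> T r = r ->
     p = q \/ q = r \/ p = r).
Proof.
  intros [Hpos [Hzero [Hsym Htri]]] _ Hper Ha Hl Hal Hcon Hcont [phi [Hphi Hconv]].
  split.
  2:{ intros p q r Hp Hq Hr.
      destruct (classic (p = q)) as [|Hpq]; [now left|].
      destruct (classic (q = r)) as [|Hqr]; [now right; left|].
      destruct (classic (p = r)) as [|Hpr]; [now right; right|].
      exfalso. specialize (Hcon p q r Hpq Hqr Hpr).
      rewrite Hp, Hq, Hr in Hcon.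
      assert (E1 : d p p = 0) by (apply Hzero; auto).
      assert (E2 : d q q = 0) by (apply Hzero; auto).
      assert (E3 : d r r = 0) by (apply Hzero; auto).
      rewrite E1, E2, E3 in Hcon.
      assert (0 < d p q).
      { destruct (Hpos p q) as [h|h]; auto. symmetry in h. apply Hzero in h. contradiction. }
      pose proof (Hpos q r). pose proof (Hpos p r). rewrite (Hsym r p) in Hcon.
      assert (alpha * (d p q + d q r + d p r) < 1 * (d p q + d q r + d p r)).
      { apply Rmult_lt_compat_r; lra. }
      lra. }
  set (x := iter_T T x0).
  set (a := fun n => d (x n) (x (S n))).
  assert (Ha0 : forall eps, 0 < eps -> exists N, forall n, (N <= n)%nat -> a n < eps).
  { intros eps Heps.
    destruct (classic (exists N, x (S N) = x N)) as [[N HN]|Hnd].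
    - exists N. intros n Hn.
      assert (Hc : forall m, x (m + N)%nat = x N).
      { induction m; [reflexivity|]. simpl. change (x (S (m + N))) with (T (x (m+N)%nat)).
        rewrite IHm. exact HN. }
      unfold a. replace n with ((n - N) + N)%nat by lia.
      replace (S (n - N + N)) with ((S (n - N)) + N)%nat by lia.
      rewrite !Hc. assert (d (x N) (x N) = 0) by (apply Hzero; auto). lra.
    - assert (Hne : forall n, x (S n) <> x n) by (intros n h; apply Hnd; exists n; exact h).
      set (p := fun n => d (x n) (x (S n)) + d (x (S n)) (x (S (S n))) + d (x n) (x (S (S n)))).
      set (q := (alpha + lambda) / (1 - lambda / 2)).
      assert (Hq0 : 0 <= q). { unfold q. apply Rmult_le_pos; [lra|]. left; apply Rinv_0_lt_compat; lra. }
      assert (Hq1 : q < 1). { unfold q. apply (Rmult_lt_reg_r (1 - lambda/2)); [lra|].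
        field_simplify; lra. }
      assert (Hstep : forall n, p (S n) <= q * p n).
      { intros n.
        assert (H1 : x (S n) <> x n) by apply Hne.
        assert (H2 : x (S (S n)) <> x (S n)) by apply Hne.
        assert (H3 : x (S (S n)) <> x n) by (apply Hper; exact H1).
        specialize (Hcon (x n) (x (S n)) (x (S (S n))) (fun h => H1 (eq_sym h))
                         (fun h => H2 (eq_sym h)) (fun h => H3 (eq_sym h))).
        change (T (x n)) with (x (S n)) in Hcon.
        change (T (x (S n))) with (x (S (S n))) in Hcon.
        change (T (x (S (S n)))) with (x (S (S (S n)))) in Hcon.
        rewrite (Hsym (x (S (S n))) (x n)) in Hcon.
        pose proof (Htri (x n) (x (S (S n))) (x (S n))).
        pose proof (Htri (x (S n)) (x n) (x (S (S n)))).
        pose proof (Htri (x (S (S n))) (x (S n)) (x (S (S (S n))))). pose proof (Hpos (x n) (x (S (S n)))).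
        rewrite (Hsym (x (S (S n))) (x (S n))) in *.
        rewrite (Hsym (x (S n)) (x n)) in *.
        assert (Hb : lambda * (d (x n) (x (S n)) + d (x (S n)) (x (S (S n))) + d (x (S (S n))) (x (S (S (S n)))))
                     <= lambda * (p n + p (S n) / 2)).
        { apply Rmult_le_compat_l; auto. unfold p. lra. }
        assert (Hc : p (S n) * (1 - lambda/2) <= (alpha + lambda) * p n).
        { unfold p in *. lra. }
        apply (Rmult_le_reg_r (1 - lambda/2)); [lra|].
        unfold q. field_simplify; [|lra]. lra. }
      assert (Hgeo : forall n, p n <= q ^ n * p O).
      { induction n; simpl; [lra|].
        pose proof (Hstep n). apply Rle_trans with (q * p n); auto.
        rewrite Rmult_assoc. apply Rmult_le_compat_l; auto. }
      assert (Hp0 : 0 <= p O).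
      { unfold p. pose proof (Hpos (x O) (x 1%nat)). pose proof (Hpos (x 1%nat) (x 2%nat)).
        pose proof (Hpos (x O) (x 2%nat)). lra. }
      destruct (pow_lt_1_zero q ltac:(rewrite Rabs_right; lra) (eps / (p O + 1))) as [N HN].
      { apply Rdiv_lt_0_compat; lra. }
      exists N. intros n Hn. specialize (HN n Hn).
      rewrite Rabs_right in HN by (apply Rle_ge, pow_le; auto).
      assert (a n <= p n).
      { unfold a, p. pose proof (Hpos (x (S n)) (x (S (S n)))). pose proof (Hpos (x n) (x (S (S n)))). lra. }
      assert (q ^ n * p O <= eps / (p O + 1) * p O) by (apply Rmult_le_compat_r; lra).
      assert (eps / (p O + 1) * p O < eps).
      { apply (Rmult_lt_reg_r (p O + 1)); [lra|]. field_simplify; lra. }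
      pose proof (Hgeo n). lra. }
  apply Hzero. rewrite Hsym.
  destruct (Hpos xstar (T xstar)) as [HD|HD]; [|auto].
  exfalso. set (D := d xstar (T xstar)) in *.
  destruct (Hcont (D/3) ltac:(lra)) as [delta [Hdel Hdelta]].
  destruct (Ha0 (D/3) ltac:(lra)) as [N1 HN1].
  destruct (Hconv (Rmin (D/3) delta) ltac:(apply Rmin_pos; lra)) as [K HK].
  set (k := Nat.max K N1).
  specialize (HK k ltac:(unfold k; lia)). simpl in HK.
  pose proof (Rmin_l (D/3) delta). pose proof (Rmin_r (D/3) delta).
  pose proof (phi_ge phi Hphi k).
  specialize (HN1 (phi k) ltac:(unfold k in *; lia)).
  specialize (Hdelta (x (phi k)) ltac:(unfold x; lra)).
  unfold a in HN1. change (x (S (phi k))) with (T (x (phi k))) in HN1.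
  pose proof (Htri xstar (x (phi k)) (T xstar)).
  pose proof (Htri (x (phi k)) (T (x (phi k))) (T xstar)).
  rewrite (Hsym xstar (x (phi k))) in *.
  unfold x, D in *. lra.
Qed.
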